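(* For all $n\in\mathbb N$: $\mathsf d_n\otimes\mathsf I_n\mathrel{;}\mathsf I_n\otimes\mathsf e_n\ \sim\ \mathsf I_n\ \sim\ \mathsf I_n\otimes\mathsf d_n\mathrel{;}\mathsf e_n\otimes\mathsf I_n$, where $\otimes$ binds tighter than $;$.
   Context: Wire calculus. Fix a set $\Sigma$ of signals and $\iota\notin\Sigma$; $L=\Sigma\cup\{\iota\}$; $\vec\iota$ denotes a word of $\iota$'s. Prefix strings are words over atoms: signal variables $x$, binders $\lambda x$, $\iota$, constants $\sigma\in\Sigma$. Terms: $P::= Y \mid P\mathrel{;}P\mid P\otimes P\mid \frac{u}{v}.P\mid P+P\mid \mu Y{:}\tau.P$ ($\tau$ a sort $(k,l)$). In $\frac{u}{v}.P$, variables $x$ with $\lambda x$ in $uv$ are bound (set $bd$). Sorting: $P:(k,n),R:(n,l)\Rightarrow P\mathrel{;}R:(k,l)$; $P:(k,l),Q:(m,n)\Rightarrow P\otimes Q:(k+m,l+n)$; $\frac{u}{v}.P:(|u|,|v|)$ when $P$ has that sort; $\mu Y{:}\tau.P:\tau$; $P+Q:\tau$ for $P,Q:\tau$. Closed terms only. Transitions $P\xrightarrow[\vec b]{\vec a}Q$ are generated by: (Refl) $P\xrightarrow[\vec\iota]{\vec\iota}P$; ($\iota$L) $P\xrightarrow[\vec\iota]{\vec\iota}R\xrightarrow[\vec b]{\vec a}Q$ gives $P\xrightarrow[\vec b]{\vec a}Q$; ($\iota$R) $P\xrightarrow[\vec b]{\vec a}R\xrightarrow[\vec\iota]{\vec\iota}Q$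 gives $P\xrightarrow[\vec b]{\vec a}Q$; (Cut) $P\xrightarrow[\vec c]{\vec a}Q$, $R\xrightarrow[\vec b]{\vec c}S$ give $P\mathrel{;}R\xrightarrow[\vec b]{\vec a}Q\mathrel{;}S$; (Ten) $P\xrightarrow[\vec b]{\vec a}Q$, $R\xrightarrow[\vec d]{\vec c}S$ give $P\otimes R\xrightarrow[\vec b\vec d]{\vec a\vec c}Q\otimes S$; (Pref) for each $\sigma:bd\to L$, $\frac{u}{v}.P\xrightarrow[v|_\sigma]{u|_\sigma}P|_\sigma$; (Rec) $P[\mu Y.P/Y]\xrightarrow[\vec b]{\vec a}Q$ gives $\mu Y.P\xrightarrow[\vec b]{\vec a}Q$; ($+\iota$) $P\xrightarrow[\vec\iota]{\vec\iota}Q$, $R\xrightarrow[\vec\iota]{\vec\iota}S$ give $P+R\xrightarrow[\vec\iota]{\vec\iota}Q+S$; ($+$L/R) $P\xrightarrow[\vec b]{\vec a}Q$ with $\vec a\vec b$ not all $\iota$ gives $P+R\xrightarrow[\vec b]{\vec a}Q$ and $R+P\xrightarrow[\vec b]{\vec a}Q$. Bisimilarity $\sim$: $P\sim Q$ iff some relation $S\ni(P,Q)$ satisfies: if $(P',Q')\in S$ and $P'\xrightarrow[\vec b]{\vec a}P''$ then $Q'\xrightarrow[\vec b]{\vec a}Q''$ with $(P'',Q'')\in S$, and symmetrically. Constants: $\mathsf I_k=\mu Y.\frac{\lambda x_1\cdots\lambda x_k}{\lambda x_1\cdots\lambda x_k}.Y:(k,k)$, $\mathsf I=\mathsf I_1$;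 $\mathsf d=\mu Y.\frac{\epsilon}{\lambda x\lambda x}.Y:(0,2)$; $\mathsf e=\mu Y.\frac{\lambda x\lambda x}{\epsilon}.Y:(2,0)$ ($\epsilon$ empty string). Recursively: $\mathsf d_1=\mathsf d$, $\mathsf d_{n+1}=\mathsf d\mathrel{;}(\mathsf I\otimes\mathsf d_n\otimes\mathsf I)$; $\mathsf e_1=\mathsf e$, $\mathsf e_{n+1}=(\mathsf I_n\otimes\mathsf e\otimes\mathsf I_n)\mathrel{;}\mathsf e_n$; and $\mathsf d_0=\mathsf e_0=\mathsf I_0=0:=\mu Y{:}(0,0).Y$. So $\mathsf d_n:(0,2n)$, $\mathsf e_n:(2n,0)$. *)

(* Defs.v *)
From Stdlib Require Import List Arith Bool.
Import ListNotations.
Set Implicit Arguments.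

Section Wire.
Variable Sigma : Type.

Definition lab := option Sigma.
Definition iota : lab := None.

Inductive atom : Type :=
| AVar   (x : nat)
| ALam   (x : nat)
| AIota
| AConst (s : Sigma).

Inductive term : Type :=
| TVar (Y : nat)
| TSeq (P Q : term)
| TTen (P Q : term)
| TPre (u v : list atom) (P : term)
| TSum (P Q : term)
| TMu  (Y : nat) (k l : nat) (P : term).

Definition ctx := nat -> option (nat * nat).
Definition ctx_upd (G : ctx) (Y : nat) (t : nat * nat) : ctx :=
  fun Z => if Nat.eqb Z Y then Some t else G Z.

Inductive has_sort : ctx -> term -> nat -> nat -> Prop :=
| so_var G Y k l : G Y = Some (k, l) -> has_sort G (TVar Y) k l
| so_seq G P R k n l : has_sort G P k n -> has_sort G R n l -> has_sort G (TSeq P R) k l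
| so_ten G P Q k l m n : has_sort G P k l -> has_sort G Q m n ->
    has_sort G (TTen P Q) (k + m) (l + n)
| so_pre G u v P : has_sort G P (length u) (length v) ->
    has_sort G (TPre u v P) (length u) (length v)
| so_sum G P Q k l : has_sort G P k l -> has_sort G Q k l -> has_sort G (TSum P Q) k l
| so_mu G Y k l P : has_sort (ctx_upd G Y (k, l)) P k l -> has_sort G (TMu Y k l P) k l.

Definition sorted (P : term) (k l : nat) : Prop := has_sort (fun _ => None) P k l.

Fixpoint lam_vars (w : list atom) : list nat :=
  match w with
  | [] => []
  | ALam x :: w' => x :: lam_vars w'
  | _ :: w' => lam_vars w'
  end.

Definition memb (x : nat) (s : list nat) : bool := existsb (Nat.eqb x) s.

Definition atom_lab (sg : nat -> lab) (a : atom) : lab :=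
  match a with
  | AVar x | ALam x => sg x
  | AIota => None
  | AConst s => Some s
  end.
Definition word_lab (sg : nat -> lab) (w : list atom) : list lab := map (atom_lab sg) w.

Definition lab_atom (c : lab) : atom :=
  match c with None => AIota | Some s => AConst s end.

Definition atom_ssubst (bd : list nat) (sg : nat -> lab) (a : atom) : atom :=
  match a with
  | AVar x => if memb x bd then lab_atom (sg x) else a
  | ALam x => if memb x bd then lab_atom (sg x) else a
  | _ => a
  end.

Fixpoint ssubst (bd : list nat) (sg : nat -> lab) (P : term) : term :=
  match P with
  | TVar Y => TVar Y
  | TSeq P1 P2 => TSeq (ssubst bd sg P1) (ssubst bd sg P2)
  | TTen P1 P2 => TTen (ssubst bd sg P1) (ssubst bd sg P2)
  | TPre u v P1 =>
      let bd' := filter (fun x => negb (memb x (lam_vars (u ++ v)))) bd in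
      TPre (map (atom_ssubst bd' sg) u) (map (atom_ssubst bd' sg) v) (ssubst bd' sg P1)
  | TSum P1 P2 => TSum (ssubst bd sg P1) (ssubst bd sg P2)
  | TMu Y k l P1 => TMu Y k l (ssubst bd sg P1)
  end.

(* substitution of a (closed) term N for the process variable Y *)
Fixpoint psubst (P : term) (Y : nat) (N : term) : term :=
  match P with
  | TVar Z => if Nat.eqb Z Y then N else TVar Z
  | TSeq P1 P2 => TSeq (psubst P1 Y N) (psubst P2 Y N)
  | TTen P1 P2 => TTen (psubst P1 Y N) (psubst P2 Y N)
  | TPre u v P1 => TPre u v (psubst P1 Y N)
  | TSum P1 P2 => TSum (psubst P1 Y N) (psubst P2 Y N)
  | TMu Z k l P1 => if Nat.eqb Z Y then TMu Z k l P1 else TMu Z k l (psubst P1 Y N)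
  end.

Definition all_iota (w : list lab) : Prop := Forall (fun c => c = None) w.

(* step P a b Q  is  P --(a above / b below)--> Q *)
Inductive step : term -> list lab -> list lab -> term -> Prop :=
| st_refl P k l : sorted P k l -> step P (repeat None k) (repeat None l) P
| st_iotaL P R Q a b a0 b0 : all_iota a0 -> all_iota b0 ->
    step P a0 b0 R -> step R a b Q -> step P a b Q
| st_iotaR P R Q a b a0 b0 : all_iota a0 -> all_iota b0 ->
    step P a b R -> step R a0 b0 Q -> step P a b Q
| st_cut P Q R S a b c : step P a c Q -> step R c b S -> step (TSeq P R) a b (TSeq Q S)
| st_ten P Q R S a b c d : step P a b Q -> step R c d S ->
    step (TTen P R) (a ++ c) (b ++ d) (TTen Q S)
| st_pref u v P (sg : nat -> lab) :
    step (TPre u v P) (word_lab sg u) (word_lab sg v) (ssubst (lam_vars (u ++ v)) sg P)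
| st_rec Y k l P a b Q : step (psubst P Y (TMu Y k l P)) a b Q -> step (TMu Y k l P) a b Q
| st_sum_iota P Q R S a b : all_iota a -> all_iota b ->
    step P a b Q -> step R a b S -> step (TSum P R) a b (TSum Q S)
| st_sumL P Q R a b : ~ all_iota (a ++ b) -> step P a b Q -> step (TSum P R) a b Q
| st_sumR P Q R a b : ~ all_iota (a ++ b) -> step P a b Q -> step (TSum R P) a b Q.

Definition bisimulation (S : term -> term -> Prop) : Prop :=
  forall P Q, S P Q ->
    (forall a b P', step P a b P' -> exists Q', step Q a b Q' /\ S P' Q') /\
    (forall a b Q', step Q a b Q' -> exists P', step P a b P' /\ S P' Q').

Definition bisim (P Q : term) : Prop := exists S, S P Q /\ bisimulation S.

(* constants; process variable Y is 0, signal variables x_i are i *)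
Definition zero : term := TMu 0 0 0 (TVar 0).

Definition In (k : nat) : term :=
  match k with
  | 0 => zero
  | _ => TMu 0 k k (TPre (map ALam (seq 1 k)) (map ALam (seq 1 k)) (TVar 0))
  end.
Definition I1 : term := In 1.

Definition dd : term := TMu 0 0 2 (TPre [] [ALam 1; ALam 1] (TVar 0)).
Definition ee : term := TMu 0 2 0 (TPre [ALam 1; ALam 1] [] (TVar 0)).

Fixpoint dn (n : nat) : term :=
  match n with
  | 0 => zero
  | S m => match m with
           | 0 => dd
           | S _ => TSeq dd (TTen (TTen I1 (dn m)) I1)
           end
  end.

Fixpoint en (n : nat) : term :=
  match n with
  | 0 => zero
  | S m => match m with
           | 0 => ee
           | S _ => TSeq (TTen (TTen (In m) ee) (In m)) (en m)
           end
  end.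

End Wire.

Arguments zero {Sigma}.
Arguments dd {Sigma}.
Arguments ee {Sigma}.
Arguments In {Sigma} k.
Arguments I1 {Sigma}.
Arguments dn {Sigma} n.
Arguments en {Sigma} n.

(* Main.v *)
From Stdlib Require Import List Arith Bool Lia.
Import ListNotations.
Require Import Defs.

Definition good {S : Type} (St : term S -> Prop) (T : list (lab S) -> list (lab S) -> Prop) :=
  (forall X a b Q, St X -> step X a b Q -> St Q /\ T a b) /\
  (forall X a b, St X -> T a b -> exists Q, St Q /\ step X a b Q).

Lemma good_iff {S : Type} (St : term S -> Prop) T T' :
  good St T -> (forall a b, T a b <-> T' a b) -> good St T'.
Proof.
  intros [H1 H2] E; split.
  - intros X a b Q HX Hs; destruct (H1 X a b Q HX Hs); split; auto; apply E; auto.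
  - intros X a b HX HT; apply H2; auto; apply E; auto.
Qed.

Lemma good_bisim {S : Type} (St1 St2 : term S -> Prop) T1 T2 P Q :
  good St1 T1 -> good St2 T2 -> (forall a b, T1 a b <-> T2 a b) -> St1 P -> St2 Q -> bisim P Q.
Proof.
  intros [A1 B1] [A2 B2] E HP HQ.
  exists (fun X Y => St1 X /\ St2 Y); split; auto.
  intros X Y [HX HY]; split.
  - intros a b X' Hs. destruct (A1 _ _ _ _ HX Hs) as [HX' HT].
    destruct (B2 Y a b HY) as [Y' [HY' Hs']]. apply E; auto.
    exists Y'; auto.
  - intros a b Y' Hs. destruct (A2 _ _ _ _ HY Hs) as [HY' HT].
    destruct (B1 X a b HX) as [X' [HX' Hs']]. apply E; auto.
    exists X'; auto.
Qed.

Definition seqSt {S : Type} (St1 St2 : term S -> Prop) X :=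
  exists P R, X = TSeq P R /\ St1 P /\ St2 R.
Definition compT {S : Type} (T1 T2 : list (lab S) -> list (lab S) -> Prop) a b :=
  exists c, T1 a c /\ T2 c b.

Lemma good_seq {S : Type} (St1 St2 : term S -> Prop) T1 T2 :
  good St1 T1 -> good St2 T2 -> good (seqSt St1 St2) (compT T1 T2).
Proof.
  intros [A1 B1] [A2 B2]; split.
  - intros X a b Q HX Hs. revert HX. induction Hs; intros HX;
      destruct HX as [P0 [R0 [E [H1 H2]]]]; try discriminate.
    + subst. inversion H; subst.
      split. exists P0, R0; auto.
      exists (repeat None n). split.
      * eapply A1; eauto. constructor; auto.
      * eapply A2; eauto. constructor; auto.
    + subst. apply IHHs2. apply IHHs1. exists P0, R0; auto.
    + subst. destruct IHHs1 as [X1 X2]; [exists P0, R0; auto|]. destruct (IHHs2 X1); auto.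
    + injection E; intros; subst.
      destruct (A1 _ _ _ _ H1 Hs1), (A2 _ _ _ _ H2 Hs2).
      split. exists Q, S0; auto. exists c; auto.
  - intros X a b [P0 [R0 [E [H1 H2]]]] [c [T1c T2c]]; subst.
    destruct (B1 P0 a c H1 T1c) as [P' [HP' S1]].
    destruct (B2 R0 c b H2 T2c) as [R' [HR' S2]].
    exists (TSeq P' R'); split. exists P', R'; auto. eapply st_cut; eauto.
Qed.

Definition tenSt {S : Type} (St1 St2 : term S -> Prop) X :=
  exists P R, X = TTen P R /\ St1 P /\ St2 R.
Definition tenT {S : Type} (T1 T2 : list (lab S) -> list (lab S) -> Prop) a b :=
  exists a1 a2 b1 b2, a = a1 ++ a2 /\ b = b1 ++ b2 /\ T1 a1 b1 /\ T2 a2 b2.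

Lemma good_ten {S : Type} (St1 St2 : term S -> Prop) T1 T2 :
  good St1 T1 -> good St2 T2 -> good (tenSt St1 St2) (tenT T1 T2).
Proof.
  intros [A1 B1] [A2 B2]; split.
  - intros X a b Q HX Hs. revert HX. induction Hs; intros HX;
      destruct HX as [P0 [R0 [E [H1 H2]]]]; try discriminate.
    + subst. inversion H; subst.
      split. exists P0, R0; auto.
      exists (repeat None k0), (repeat None m), (repeat None l0), (repeat None n).
      rewrite !repeat_app. repeat split.
      * eapply A1; eauto. constructor; auto.
      * eapply A2; eauto. constructor; auto.
    + subst. apply IHHs2. apply IHHs1. exists P0, R0; auto.
    + subst. destruct IHHs1 as [X1 X2]; [exists P0, R0; auto|]. destruct (IHHs2 X1); auto.
    + injection E; intros; subst.
      destruct (A1 _ _ _ _ H1 Hs1), (A2 _ _ _ _ H2 Hs2).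
      split. exists Q, S0; auto. exists a, c, b, d; auto.
  - intros X a b [P0 [R0 [E [H1 H2]]]] [a1 [a2 [b1 [b2 [-> [-> [T1c T2c]]]]]]]; subst.
    destruct (B1 P0 a1 b1 H1 T1c) as [P' [HP' S1]].
    destruct (B2 R0 a2 b2 H2 T2c) as [R' [HR' S2]].
    exists (TTen P' R'); split. exists P', R'; auto. apply st_ten; auto.
Qed.
Lemma memb_in (x : nat) s : List.In x s -> memb x s = true.
Proof. intros H. unfold memb. apply existsb_exists. exists x. split; auto. apply Nat.eqb_refl. Qed.

Lemma filter_nil (l s : list nat) : (forall x, List.In x l -> List.In x s) ->
  filter (fun x => negb (memb x s)) l = [].
Proof.
  induction l; simpl; intros H; auto.
  rewrite memb_in by auto. simpl. apply IHl. intros; auto.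
Qed.

Lemma map_ssubst_nil {S} (sg : nat -> lab S) u : map (atom_ssubst [] sg) u = u.
Proof. induction u as [|[]]; simpl; f_equal; auto. Qed.

Lemma ssubst_M {S} k l (u v : list (atom S)) sg :
  ssubst (lam_vars (u++v)) sg (TMu 0 k l (TPre u v (TVar S 0))) = TMu 0 k l (TPre u v (TVar S 0)).
Proof.
  simpl. rewrite filter_nil by auto. rewrite !map_ssubst_nil. reflexivity.
Qed.

Lemma sorted_M {S} (u v : list (atom S)) :
  sorted (TMu 0 (length u) (length v) (TPre u v (TVar S 0))) (length u) (length v).
Proof. constructor. constructor. constructor. reflexivity. Qed.

Lemma good_pre {S} (u v : list (atom S)) :
  good (fun X => X = TMu 0 (length u) (length v) (TPre u v (TVar S 0)) \/
                 X = TPre u v (TMu 0 (length u) (length v) (TPre u v (TVar S 0))))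
       (fun a b => (a = repeat None (length u) /\ b = repeat None (length v)) \/
                   exists sg, a = word_lab sg u /\ b = word_lab sg v).
Proof.
  set (M := TMu 0 (length u) (length v) (TPre u v (TVar S 0))).
  split.
  - intros X a b Q HX Hs. revert HX. induction Hs; intros HX.
    + split; auto. left. destruct HX as [-> | ->]; inversion H; subst; auto.
    + apply IHHs2. apply IHHs1. auto.
    + destruct IHHs1 as [X1 X2]; auto. destruct (IHHs2 X1); auto.
    + destruct HX as [E|E]; discriminate.
    + destruct HX as [E|E]; discriminate.
    + destruct HX as [E|E]; [discriminate|]. injection E; intros; subst.
      unfold M; rewrite ssubst_M. split; [left; reflexivity| right; eauto].
    + destruct HX as [E|E]; [|discriminate]. unfold M in E. injection E; intros; subst.
      apply IHHs. right. reflexivity.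
    + destruct HX as [E|E]; discriminate.
    + destruct HX as [E|E]; discriminate.
    + destruct HX as [E|E]; discriminate.
  - intros X a b HX [[-> ->] | [sg [-> ->]]].
    + exists X; split; auto. apply st_refl.
      destruct HX as [-> | ->]. apply sorted_M. constructor. apply sorted_M.
    + exists M; split; auto.
      pose proof (st_pref u v M sg) as Hp. unfold M in Hp at 2. rewrite ssubst_M in Hp.
      destruct HX as [-> | ->]; auto.
      apply st_rec. exact Hp.
Qed.

Definition zero_good {S} :
  good (fun X : term S => X = zero) (fun a b => a = [] /\ b = []).
Proof.
  split.
  - intros X a b Q HX Hs. revert HX. induction Hs; intros HX; subst; try discriminate.
    + inversion H; subst; auto.
    + apply IHHs2. apply IHHs1. auto.
    + destruct IHHs1 as [X1 X2]; auto. destruct (IHHs2 X1); auto.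
    + injection HX; intros; subst. apply IHHs. reflexivity.
  - intros X a b -> [-> ->]. exists zero; split; auto.
    apply st_refl with (k:=0) (l:=0). constructor. constructor. reflexivity.
Qed.
Ltac unp := repeat match goal with
  | H : exists _, _ |- _ => destruct H
  | H : _ /\ _ |- _ => destruct H
  end; subst.

Lemma app_len {A} (u v w x : list A) : length u = length w -> u ++ v = w ++ x -> u = w /\ v = x.
Proof.
  revert w; induction u; destruct w; simpl; intros H E; try discriminate; auto.
  injection H; injection E; intros E1 E2 H1; subst. destruct (IHu _ H1 E1); subst; auto.
Qed.

Lemma map_nth_seq' {A} (d : A) (a : list A) s :
  map (fun i => nth (i - s) a d) (seq s (length a)) = a.
Proof.
  revert s; induction a; intros s; simpl; auto. rewrite Nat.sub_diag. f_equal.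
  rewrite <- (IHa (S s)) at 2. apply map_ext_in. intros i Hi. apply in_seq in Hi.
  replace (i - s) with (S (i - S s)) by lia. reflexivity.
Qed.

Definition Tid {Sg} n (a b : list (lab Sg)) := a = b /\ length a = n.
Definition Tdn {Sg} n (a b : list (lab Sg)) := a = [] /\ exists w, length w = n /\ b = w ++ rev w.
Definition Ten {Sg} n (a b : list (lab Sg)) := b = [] /\ exists w, length w = n /\ a = w ++ rev w.

Lemma In_good {Sg} n : exists St, good St (@Tid Sg n) /\ St (In n).
Proof.
  destruct n as [|m].
  - eexists; split. eapply good_iff. apply zero_good.
    intros a b; unfold Tid; split; intros; unp; auto. destruct b; simpl in *; auto; discriminate.
    reflexivity.
  - set (u := map (@ALam Sg) (seq 1 (S m))).
    assert (Lu : length u = S m) by (unfold u; rewrite length_map, length_seq; auto).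
    eexists; split. eapply good_iff. apply (good_pre u u).
    + intros a b; unfold Tid; split; intros H.
      * destruct H as [[-> ->] | [sg [-> ->]]]. rewrite repeat_length; auto.
        unfold word_lab; rewrite length_map; auto.
      * unp. right. exists (fun i => nth (i - 1) b None).
        assert (b = word_lab (fun i => nth (i - 1) b None) u) as E.
        { unfold word_lab, u. rewrite map_map. simpl atom_lab.
          rewrite <- H0. symmetry. apply map_nth_seq'. }
        rewrite <- E; auto.
    + left. simpl In. rewrite Lu. reflexivity.
Qed.

Lemma dd_good {Sg} : exists St, good St (@Tdn Sg 1) /\ St dd.
Proof.
  eexists; split. eapply good_iff. apply (good_pre (S:=Sg) [] [@ALam Sg 1; @ALam Sg 1]).
  - intros a b; unfold Tdn; simpl; split; intros H.
    + destruct H as [[-> ->] | [sg [-> ->]]]; split; auto.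
      exists [None]; auto. exists [sg 1]; auto.
    + unp. destruct x as [|x [|]]; try discriminate. simpl. right. exists (fun _ => x). auto.
  - left. reflexivity.
Qed.

Lemma ee_good {Sg} : exists St, good St (@Ten Sg 1) /\ St ee.
Proof.
  eexists; split. eapply good_iff. apply (good_pre (S:=Sg) [@ALam Sg 1; @ALam Sg 1] []).
  - intros a b; unfold Ten; simpl; split; intros H.
    + destruct H as [[-> ->] | [sg [-> ->]]]; split; auto.
      exists [None]; auto. exists [sg 1]; auto.
    + unp. destruct x as [|x [|]]; try discriminate. simpl. right. exists (fun _ => x). auto.
  - left. reflexivity.
Qed.
Arguments good_seq {S St1 St2 T1 T2}.
Arguments good_ten {S St1 St2 T1 T2}.
Lemma dn_good {Sg} n : exists St, good St (@Tdn Sg n) /\ St (dn n).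
Proof.
  induction n as [|[|m] IH].
  - eexists; split. eapply good_iff. apply zero_good.
    intros a b; unfold Tdn; split; intros; unp; auto.
    split; auto. exists []; auto. destruct x; simpl in *; auto; discriminate.
    reflexivity.
  - apply dd_good.
  - destruct IH as [StD [GD HD]]. destruct (@dd_good Sg) as [St1 [G1 H1]].
    destruct (@In_good Sg 1) as [StI [GI HI]].
    eexists; split. eapply good_iff.
    apply (good_seq G1 (good_ten (good_ten GI GD) GI)).
    + intros a b; unfold compT, tenT, Tdn, Tid; split; intros H.
      * destruct H as [c [[-> [w [Lw ->]]] H2]].
        destruct H2 as [a1 [a2 [b1 [b2 [Ec [-> [X [<- L2']]]]]]]].
        destruct X as [a3 [a4 [b3 [b4 [-> [-> [[<- L3] [-> [w2 [L2 ->]]]]]]]]]].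
        destruct w as [|y [|]]; try discriminate.
        destruct a3 as [|z [|]]; try discriminate.
        destruct a2 as [|t [|]]; try discriminate. simpl in *.
        assert (t = z) by congruence. subst t. split; auto. exists (z :: w2). split. simpl; auto.
        simpl. rewrite <- !app_assoc. reflexivity.
      * unp. destruct x as [|t w]; try discriminate. simpl in H0.
        exists [t; t]. split. split; auto. exists [t]. auto.
        exists ([t] ++ []), [t], ([t] ++ (w ++ rev w)), [t].
        repeat split; auto.
        -- simpl. rewrite <- !app_assoc. reflexivity.
        -- exists [t], [], [t], (w ++ rev w). repeat split; auto. exists w; auto.
    + exists dd, (TTen (TTen I1 (dn (S m))) I1). repeat split; auto.
      exists (TTen I1 (dn (S m))), I1. repeat split; auto.
      exists I1, (dn (S m)). auto.
Qed.

Lemma en_good {Sg} n : exists St, good St (@Ten Sg n) /\ St (en n).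
Proof.
  induction n as [|[|m] IH].
  - eexists; split. eapply good_iff. apply zero_good.
    intros a b; unfold Ten; split; intros; unp; auto.
    split; auto. exists []; auto. destruct x; simpl in *; auto; discriminate.
    reflexivity.
  - apply ee_good.
  - destruct IH as [StE [GE HE]]. destruct (@ee_good Sg) as [St1 [G1 H1]].
    destruct (@In_good Sg (S m)) as [StI [GI HI]].
    eexists; split. eapply good_iff.
    apply (good_seq (good_ten (good_ten GI G1) GI) GE).
    + intros a b; unfold compT, tenT, Ten, Tid; split; intros H.
      * destruct H as [c [Hc1 [-> [w [Lw Ec]]]]].
        destruct Hc1 as [a1 [a2 [b1 [b2 [-> [-> [X [<- L2']]]]]]]].
        destruct X as [a3 [a4 [b3 [b4 [-> [-> [[<- L3] [-> [y [Ly ->]]]]]]]]]].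
        rewrite !app_nil_r in Ec.
        destruct (app_len _ _ _ _ (eq_trans L3 (eq_sym Lw)) Ec) as [-> ->].
        destruct y as [|y [|]]; try discriminate.
        split; auto. exists (w ++ [y]). split. rewrite length_app; simpl; lia.
        rewrite rev_app_distr. simpl. rewrite <- !app_assoc. reflexivity.
      * unp. destruct (exists_last (l:=x)) as [w [y ->]].
        { intros ->; discriminate. }
        rewrite length_app in H0; simpl in H0.
        exists (w ++ rev w). split.
        -- exists (w ++ [y; y]), (rev w), w, (rev w). split; [|split; [reflexivity|split]].
           ++ rewrite rev_app_distr. simpl. rewrite <- !app_assoc. reflexivity.
           ++ exists w, [y; y], w, []. rewrite app_nil_r. repeat split; try lia. exists [y]; auto.
           ++ split; auto. rewrite length_rev; lia.
        -- split; auto. exists w; split; auto; lia.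
    + exists (TTen (TTen (In (S m)) ee) (In (S m))), (en (S m)). repeat split; auto.
      exists (TTen (In (S m)) ee), (In (S m)). repeat split; auto.
      exists (In (S m)), ee. auto.
Qed.

Theorem mainTheorem5 (Sigma : Type) (n : nat) :
  bisim (TSeq (TTen (@dn Sigma n) (In n)) (TTen (In n) (en n))) (In n) /\
  bisim (In n) (TSeq (TTen (@In Sigma n) (dn n)) (TTen (en n) (In n))).
Proof.
  destruct (@In_good Sigma n) as [StI [GI HI]].
  destruct (@dn_good Sigma n) as [StD [GD HD]].
  destruct (@en_good Sigma n) as [StE [GE HE]].
  split.
  - eapply good_bisim. apply (good_seq (good_ten GD GI) (good_ten GI GE)). apply GI.
    + intros a b; unfold compT, tenT, Tid, Tdn, Ten; split; intros H.
      * destruct H as [c [H1 H2]].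
        destruct H1 as [a1 [a2 [b1 [b2 [-> [-> [[-> [w [Lw ->]]] [<- La2]]]]]]]].
        destruct H2 as [a1' [a2' [b1' [b2' [Ec [-> [[<- L1] [-> [u [Lu ->]]]]]]]]]].
        rewrite <- app_assoc in Ec.
        destruct (app_len _ _ _ _ (eq_trans Lw (eq_sym L1)) Ec) as [-> Ec2].
        assert (Lr : length (rev a1') = length u) by (rewrite length_rev; lia).
        destruct (app_len _ _ _ _ Lr Ec2) as [E1 ->].
        rewrite <- E1, rev_involutive, app_nil_r. auto.
      * destruct H as [-> La].
        exists ((b ++ rev b) ++ b). split.
        -- exists [], b, (b ++ rev b), b. repeat split; auto. exists b; auto.
        -- exists b, (rev b ++ b), b, []. rewrite <- app_assoc, app_nil_r. repeat split; auto.
           exists (rev b). rewrite rev_involutive, length_rev. auto.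
    + exists (TTen (dn n) (In n)), (TTen (In n) (en n)). repeat split.
      exists (dn n), (In n); auto. exists (In n), (en n); auto.
    + exact HI.
  - eapply good_bisim. apply GI. apply (good_seq (good_ten GI GD) (good_ten GE GI)).
    + intros a b; unfold compT, tenT, Tid, Tdn, Ten; split; intros H.
      * destruct H as [-> La].
        exists (b ++ (rev b ++ b)). split.
        -- exists b, [], b, (rev b ++ b). rewrite app_nil_r. repeat split; auto.
           exists (rev b). rewrite rev_involutive, length_rev. auto.
        -- exists (b ++ rev b), b, [], b. rewrite <- app_assoc. repeat split; auto. exists b; auto.
      * destruct H as [c [H1 H2]].
        destruct H1 as [a1 [a2 [b1 [b2 [-> [-> [[<- L1] [-> [w [Lw ->]]]]]]]]]].
        destruct H2 as [a1' [a2' [b1' [b2' [Ec [-> [[-> [u [Lu ->]]] [<- La2]]]]]]]].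
        rewrite <- app_assoc in Ec.
        destruct (app_len _ _ _ _ (eq_trans L1 (eq_sym Lu)) Ec) as [-> Ec2].
        assert (Lr : length w = length (rev u)) by (rewrite length_rev; lia).
        destruct (app_len _ _ _ _ Lr Ec2) as [-> E2].
        rewrite app_nil_r. simpl. rewrite <- E2, rev_involutive. auto.
    + exact HI.
    + exists (TTen (In n) (dn n)), (TTen (en n) (In n)). repeat split.
      exists (In n), (dn n); auto. exists (en n), (In n); auto.
Qed.
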